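(* Let $n\ge4$ and let $\lambda=(a_1,\dots,a_n)$ (usual coordinates) be a dominant weight of $SL(n)$ all of whose coordinates $a_i$ are non-integers. If the multiset $\{a_1,\dots,a_n\}$ contains the three values $\alpha+1,\alpha,\alpha-1$ for some $\alpha\in\mathbb R$, then $M(\lambda)$ contains a non-saturated subset.
   Context: Setup for $SL(n)$: $\varepsilon_1,\dots,\varepsilon_n$ is the standard basis of $\mathbb Q^n$, $e_i=\varepsilon_i-\frac1n(1,\dots,1)$; the character lattice $\mathfrak X(T)$ of the diagonal torus is identified with the $\mathbb Z$-span of $e_1,\dots,e_n$ inside $\{y\in\mathbb Q^n:\sum y_i=0\}$ (the $y_i$ are the ''usual coordinates''). $W=S_n$ acts by permuting coordinates. A weight is dominant if $y_1\ge y_2\ge\dots\ge y_n$. The root lattice is $\Phi=\{\sum a_ie_i\mid a_i\in\mathbb Z,\ \sum a_i\equiv0\pmod n\}$. For a dominant weight $\lambda$, $M(\lambda)=\mathrm{conv}\{w\lambda\mid w\in W\}\cap(\lambda+\Phi)$. A finite set is saturated if $\mathbb Z_+(v_1,\dots,v_m)=\mathbb Z(v_1,\dots,v_m)\cap\mathbb Q_+(v_1,\dots,v_m)$ (combinations with non-negative integer, integer, non-negative rational coefficients), non-saturated otherwise. *)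

(* Defs.v *)
(* Weights of SL(n) as row vectors in Q^n (usual coordinates). *)
From HB Require Import structures.
From mathcomp Require Import all_boot all_order all_algebra all_fingroup.
Set Implicit Arguments. Unset Strict Implicit. Unset Printing Implicit Defensive.
Import Order.TTheory GRing.Theory Num.Theory.
Local Open Scope ring_scope.

Definition e_vec (n : nat) (i : 'I_n) : 'rV[rat]_n :=
  delta_mx 0 i - (n%:R)^-1 *: const_mx 1.

Definition is_weight (n : nat) (y : 'rV[rat]_n) : Prop :=
  exists a : 'I_n -> int, y = \sum_(i < n) (a i)%:~R *: e_vec i.

Definition in_root_lattice (n : nat) (y : 'rV[rat]_n) : Prop :=
  exists a : 'I_n -> int,
    ((\sum_(i < n) a i) %% (n%:Z))%Z = 0 /\ y = \sum_(i < n) (a i)%:~R *: e_vec i.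

Definition dominant (n : nat) (y : 'rV[rat]_n) : Prop :=
  forall i j : 'I_n, (i <= j)%N -> y 0 j <= y 0 i.

Definition permute (n : nat) (w : 'S_n) (y : 'rV[rat]_n) : 'rV[rat]_n :=
  \row_i y 0 (w^-1 i)%g.

Definition in_Wconv (n : nat) (lam y : 'rV[rat]_n) : Prop :=
  exists c : 'S_n -> rat,
    (forall w, 0 <= c w) /\ \sum_(w : 'S_n) c w = 1 /\
    y = \sum_(w : 'S_n) c w *: permute w lam.

Definition M_set (n : nat) (lam y : 'rV[rat]_n) : Prop :=
  in_Wconv lam y /\ in_root_lattice (y - lam).

Definition Zplus_span (n : nat) (s : seq 'rV[rat]_n) (x : 'rV[rat]_n) : Prop :=
  exists k : 'I_(size s) -> nat, x = \sum_(i < size s) (k i)%:R *: s`_i.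
Definition Z_span (n : nat) (s : seq 'rV[rat]_n) (x : 'rV[rat]_n) : Prop :=
  exists k : 'I_(size s) -> int, x = \sum_(i < size s) (k i)%:~R *: s`_i.
Definition Qplus_span (n : nat) (s : seq 'rV[rat]_n) (x : 'rV[rat]_n) : Prop :=
  exists k : 'I_(size s) -> rat,
    (forall i, 0 <= k i) /\ x = \sum_(i < size s) k i *: s`_i.

Definition saturated (n : nat) (s : seq 'rV[rat]_n) : Prop :=
  forall x, Zplus_span s x <-> (Z_span s x /\ Qplus_span s x).

(* Main.v *)
Require Import Defs.
From HB Require Import structures.
From mathcomp Require Import all_boot all_order all_algebra all_fingroup.
Import Order.TTheory GRing.Theory Num.Theory.
Local Open Scope ring_scope.
Set Implicit Arguments.

Definition dD (n : nat) (i k : 'I_n) : 'rV[rat]_n := delta_mx 0 i - delta_mx 0 k.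

Lemma dDE n (i k t : 'I_n) : dD i k 0 t = (t == i)%:R - (t == k)%:R.
Proof. by rewrite !mxE. Qed.

Lemma sum_delta (T : finType) (V : lmodType rat) (t : T) (F : T -> V) :
  \sum_w ((w == t)%:R : rat) *: F w = F t.
Proof.
rewrite (bigD1 t) //= eqxx scale1r big1 ?addr0 // => w /negbTE ->.
by rewrite scale0r.
Qed.

Lemma sum_delta1 (R : nzRingType) (T : finType) (t : T) :
  \sum_w ((w == t)%:R : R) = 1.
Proof.
rewrite (bigD1 t) //= eqxx big1 ?addr0 // => w /negbTE -> //.
Qed.

Lemma sum_deltaM (T : finType) (t : T) (F : T -> rat) :
  \sum_w ((w == t)%:R * F w) = F t.
Proof.
rewrite (bigD1 t) //= eqxx mul1r big1 ?addr0 // => w /negbTE ->.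
by rewrite mul0r.
Qed.

Lemma root_dD n (i k : 'I_n) (c : int) : in_root_lattice (c%:~R *: dD i k).
Proof.
exists (fun t => c * ((t == i)%:R - (t == k)%:R)); split.
  by rewrite -mulr_sumr sumrB !sum_delta1 subrr mulr0 mod0z.
apply/matrixP => r s; rewrite summxE !mxE.
under eq_bigr => t _ do rewrite !mxE.


rewrite ord1 eqxx /=.
under eq_bigr => t _ do rewrite mulrBr.
rewrite sumrB -mulr_suml -rmorph_sum /= -mulr_sumr sumrB !sum_delta1 subrr mulr0 mul0r subr0.
under eq_bigr => t _ do rewrite mulrC [s == t]eq_sym.
rewrite sum_deltaM.
by rewrite mulrC rmorphM rmorphB /= !rmorph_nat mulrC.
Qed.

Definition P n (x y : 'I_n) (lam : 'rV[rat]_n) := permute (tperm x y) lam.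

Lemma PE n (x y : 'I_n) lam : x != y ->
  P x y lam = lam - (lam 0 x - lam 0 y) *: dD x y.
Proof.
move=> xy; apply/matrixP => r t; rewrite ord1 !mxE tpermV.
case: tpermP => [->|->|/eqP tx /eqP ty].
- rewrite /= !eqxx /= (negbTE xy) subr0 mulr1 opprB addrC subrK //.
- rewrite /= !eqxx /= eq_sym (negbTE xy) sub0r mulrN1 opprK addrC subrK //.
- by rewrite /= (negbTE tx) (negbTE ty) subr0 mulr0 subr0.
Qed.

Lemma M_lam n (lam : 'rV[rat]_n) : M_set lam lam.
Proof.
split.
  exists (fun w => (w == 1%g)%:R); split; first by move=> w; rewrite ler0n.
  split; first by rewrite sum_delta1.
  rewrite sum_delta; apply/matrixP => r t; rewrite !mxE invg1 perm1 ord1 //.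
case: n lam => [|n] lam.
  exists (fun _ => 0); split; first by rewrite big1.
  by rewrite big_ord0; apply/matrixP => r [].
have := root_dD (@ord0 n) ord0 0; by rewrite scale0r subrr.
Qed.

Lemma M_P n (lam : 'rV[rat]_n) x y (c : int) : x != y ->
  lam 0 x - lam 0 y = c%:~R -> M_set lam (P x y lam).
Proof.
move=> xy hc; split.
  exists (fun w => (w == tperm x y)%:R); split; first by move=> w; rewrite ler0n.
  split; first by rewrite sum_delta1.
  by rewrite sum_delta.
rewrite PE // hc addrAC subrr add0r -scaleNr -rmorphN.
exact: root_dD.
Qed.
Unset Implicit Arguments.

Lemma neq_shift (a x y : rat) : x != y -> a + x != a + y.
Proof. by rewrite (inj_eq (addrI a)). Qed.

Lemma sub_shift (a x y : rat) : (a + x) - (a + y) = x - y.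
Proof. by rewrite opprD addrACA subrr add0r. Qed.

Lemma subKeq (x p q : rat) : (x - p == x - q) = (p == q).
Proof. by rewrite (inj_eq (addrI x)) eqr_opp. Qed.
Lemma subKeq0 (x p : rat) : (x - p == x) = (p == 0).
Proof. by rewrite -{2}[x]subr0 subKeq. Qed.

Lemma subKeq0' (x p : rat) : (x == x - p) = (0 == p).
Proof. by rewrite -{1}[x]subr0 subKeq. Qed.

Lemma contra n (lam : 'rV[rat]_n) i j k m al (a b c d : nat) :
  lam 0 i = al + 1 -> lam 0 j = al + 0 -> lam 0 k = al - 1 ->
  i != j -> j != k -> i != k -> m != i -> m != j -> m != k -> lam 0 m != 0 ->
  lam - dD i k = 0 + a%:R *: lam + b%:R *: (lam - (1+1) *: dD i k)
     + c%:R *: (lam - dD i j) + d%:R *: (lam - dD j k) -> False.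
Proof.
move=> Hi Hj Hk ij jk ik mi mj mk lm0 E.
have Em := congr1 (fun v : 'rV[rat]_n => v 0 m) E.
have Ei := congr1 (fun v : 'rV[rat]_n => v 0 i) E.
have Ej := congr1 (fun v : 'rV[rat]_n => v 0 j) E.
rewrite /= !mxE /= (negbTE mi) (negbTE mj) (negbTE mk) in Em.
rewrite /= !mxE /= !eqxx /= (negbTE ij) (negbTE ik) in Ei.
rewrite /= !mxE /= !eqxx /= eq_sym (negbTE ij) (negbTE jk) in Ej.
move: Em; rewrite !subrr !mulr0 !subr0 add0r -!mulrDl -!natrD => /eqP.
rewrite -{1}[lam 0 m]mul1r -subr_eq0 -mulrBl mulf_eq0 (negbTE lm0) orbF.
rewrite subr_eq0 eq_sym pnatr_eq1 => /eqP S1.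
clear E; move: S1 Ei Ej.
case: a => [|[|a]]; case: b => [|[|b]]; case: c => [|[|c]]; case: d => [|[|d]] //=;
  rewrite ?addnS ?addSn //;
  move=> _ /eqP Ei /eqP Ej;
  rewrite ?mul0r ?mul1r ?add0r ?addr0 ?subr0 ?subKeq ?subKeq0 ?subKeq0' in Ei Ej;
  by [].
Qed.

Theorem lemma8 (n : nat) (hn : (4 <= n)%N) (lam : 'rV[rat]_n)
  (hw : is_weight lam) (hdom : dominant lam)
  (hnonint : forall i : 'I_n, ~ (exists z : int, lam 0 i = z%:~R))
  (h3 : exists alpha : rat, exists i j k : 'I_n,
          [/\ lam 0 i = alpha + 1, lam 0 j = alpha & lam 0 k = alpha - 1]) :
  exists s : seq 'rV[rat]_n, (forall v, v \in s -> M_set lam v) /\ ~ saturated s.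
Proof.
case: h3 => al [i [j [k [Hi Hj Hk]]]].
have {}Hj : lam 0 j = al + 0 by rewrite addr0.
have ij : i != j.
  by apply/eqP => E; move: (@neq_shift al 1 0 isT); rewrite -Hi -Hj E eqxx.
have jk : j != k.
  by apply/eqP => E; move: (@neq_shift al 0 (-1) isT); rewrite -Hj -Hk E eqxx.
have ik : i != k.
  by apply/eqP => E; move: (@neq_shift al 1 (-1) isT); rewrite -Hi -Hk E eqxx.
have [m /and3P[mi mj mk]] : exists m : 'I_n, [&& m != i, m != j & m != k].
  case: (boolP [exists m, [&& m != i, m != j & m != k]]) => [/existsP//|/existsPn H].
  have : (#|'I_n| <= 3)%N.
    apply: leq_trans (card_size [:: i; j; k]); apply: subset_leq_card.
    apply/subsetP => x _; move: (H x); rewrite !inE.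
    by case: (x == i); case: (x == j); case: (x == k).
  by rewrite card_ord => /(leq_trans hn).
have lm0 : lam 0 m != 0.
  by apply/eqP => E; apply: (hnonint m); exists 0; rewrite E.
exists [:: lam; P i k lam; P i j lam; P j k lam]; split.
  move=> v; rewrite !inE => /or4P [] /eqP ->.
  - exact: M_lam.
  - by apply: (@M_P _ _ _ _ 2) => //; rewrite Hi Hk sub_shift.
  - by apply: (@M_P _ _ _ _ 1) => //; rewrite Hi Hj sub_shift.
  - by apply: (@M_P _ _ _ _ 1) => //; rewrite Hj Hk sub_shift.
rewrite !PE // Hi Hj Hk !sub_shift.
rewrite subr0 sub0r opprK !scale1r => Hs.
have dsum : dD i j + dD j k = dD i k by rewrite /dD addrA subrK.
have : Zplus_span [:: lam; lam - (1 + 1) *: dD i k; lam - dD i j; lam - dD j k]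
    (lam - dD i k).
  apply/Hs; split.
  - exists (fun r => nth 0 [:: -1; 0; 1; 1] r); rewrite !big_ord_recr big_ord0 /=.
    rewrite !scaler_int mulrN1z mulr0z !mulr1z add0r addr0 addKr -dsum.
    by rewrite opprD addrCA.
  - exists (fun r => nth 0 [:: 2^-1; 2^-1; 0; 0] r); split.
      by case=> [[|[|[|[|]]]] ] //=; rewrite invr_ge0 ler0n.
    rewrite !big_ord_recr big_ord0 /= !scale0r !addr0 add0r.
    rewrite -scalerDr addrA.
    have -> : lam + lam = (1 + 1) *: lam by rewrite scalerDl scale1r.
    by rewrite -scalerBr scalerA mulVf ?scale1r.
case=> K E; rewrite !big_ord_recr big_ord0 /= in E.
exact: (contra _ _ _ _ _ _ _ _ _ _ _ Hi Hj Hk ij jk ik mi mj mk lm0 E).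
Qed.
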